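(* Let $f:\mathbb{Z}^n\to\mathbb{R}\cup\{+\infty\}$ be M-convex with bounded $\operatorname{dom} f$, and $\emptyset\neq R\subsetneq N$. Let $k$ be an integer with $\underline{k}\le k\le\overline{k}-2$, let $x\in M(k)$, and let $i\in R$, $j\in N\setminus R$ minimize $f'(x;i,j)$ over $i\in R$, $j\in N\setminus R$. If $f'(x+\chi_i-\chi_j;i,j)=f'(x;i,j)$, then $f'(x+\chi_i-\chi_j;i,j)\le f'(x+\chi_i-\chi_j;h,\ell)$ for all $h\in R$, $\ell\in N\setminus R$, and $x+2\chi_i-2\chi_j\in M(k+2)$.
   Context: $N=\{1,\dots,n\}$; $\chi_i\in\{0,1\}^n$ is the $i$-th unit vector; $x(R)=\sum_{i\in R}x(i)$. For $f:\mathbb{Z}^n\to\mathbb{R}\cup\{+\infty\}$, $\operatorname{dom} f=\{x\in\mathbb{Z}^n: f(x)<+\infty\}$. $f$ is M-convex if $\operatorname{dom} f\neq\emptyset$ and for all $x,y\in\operatorname{dom} f$ and every $i$ with $x(i)>y(i)$ there is $j$ with $x(j)<y(j)$ such that $f(x)+f(y)\ge f(x-\chi_i+\chi_j)+f(y+\chi_i-\chi_j)$. $f'(x;i,j)=f(x+\chi_i-\chi_j)-f(x)$ (possibly $+\infty$). $\underline{k}=\min\{x(R):x\in\operatorname{dom} f\}$, $\overline{k}=\max\{x(R):x\in\operatorname{dom} f\}$; for $\underline{k}\le k\le\overline{k}$, $z(k)=\min\{f(x): x(R)=k,\ x\in\operatorname{dom} f\}$ and $M(k)=\{x\in\operatorname{dom}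 f: x(R)=k,\ f(x)=z(k)\}$. *)

(* Defs.v *)
From HB Require Import structures.
From mathcomp Require Import all_boot all_order all_algebra.
From mathcomp Require Import reals constructive_ereal.
Set Implicit Arguments. Unset Strict Implicit. Unset Printing Implicit Defensive.
Import Order.TTheory GRing.Theory Num.Theory.
Local Open Scope ring_scope.
Local Open Scope ereal_scope.

Definition vec (n : nat) := {ffun 'I_n -> int}.

Definition chi (n : nat) (i : 'I_n) : vec n := [ffun k => ((k == i)%:R : int)].

Definition xsum (n : nat) (x : vec n) (R : {set 'I_n}) : int :=
  (\sum_(i in R) x i)%R.

Definition indom (K : realType) (n : nat) (f : vec n -> \bar K) (x : vec n) : Prop :=
  f x < +oo.

(* f : Z^n -> R \cup {+oo} : never -oo *)
Definition no_minfty (K : realType) (n : nat) (f : vec n -> \bar K) : Prop :=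
  forall x, f x != -oo.

Definition Mconvex (K : realType) (n : nat) (f : vec n -> \bar K) : Prop :=
  (exists x, indom f x) /\
  forall x y, indom f x -> indom f y ->
    forall i, (y i < x i)%R ->
      exists2 j, (x j < y j)%R &
        f (x - chi i + chi j)%R + f (y + chi i - chi j)%R <= f x + f y.

Definition bounded_dom (K : realType) (n : nat) (f : vec n -> \bar K) : Prop :=
  exists B : int, forall x, indom f x -> forall i, (`|x i| <= B)%R.

Definition fder (K : realType) (n : nat) (f : vec n -> \bar K) (x : vec n) (i j : 'I_n)
  : \bar K := f (x + chi i - chi j)%R - f x.

Definition is_kmin (K : realType) (n : nat) (f : vec n -> \bar K) (R : {set 'I_n}) (k0 : int)
  : Prop :=
  (exists2 y, indom f y & xsum y R = k0) /\ forall y, indom f y -> (k0 <= xsum y R)%R.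

Definition is_kmax (K : realType) (n : nat) (f : vec n -> \bar K) (R : {set 'I_n}) (k1 : int)
  : Prop :=
  (exists2 y, indom f y & xsum y R = k1) /\ forall y, indom f y -> (xsum y R <= k1)%R.

Definition inM (K : realType) (n : nat) (f : vec n -> \bar K) (R : {set 'I_n}) (k : int)
  (x : vec n) : Prop :=
  indom f x /\ xsum x R = k /\ forall y, indom f y -> xsum y R = k -> f x <= f y.

(* Main.v *)
Require Import Defs.
From HB Require Import structures.
From mathcomp Require Import all_boot all_order all_algebra.
From mathcomp Require Import reals constructive_ereal.
From mathcomp Require Import zify lra.
Import Order.TTheory GRing.Theory Num.Theory.
Set Implicit Arguments. Unset Strict Implicit.
Local Open Scope ring_scope.

Lemma vecE n (z : vec n) a b t :
  (z + chi a - chi b) t = z t + (t == a)%:R - (t == b)%:R.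
Proof. by rewrite !ffunE. Qed.

Lemma sum_chi n (R : {set 'I_n}) a :
  (\sum_(t in R) ((t == a)%:R : int)) = (a \in R)%:R.
Proof.
case: (boolP (a \in R)) => Ha.
  rewrite (bigD1 a) //= eqxx big1 ?addr0 // => t /andP[_ /negbTE ->] //.
rewrite big1 // => t Ht; have -> : (t == a) = false.
  by apply/negbTE; apply: contraNneq Ha => <-.
by [].
Qed.

Lemma xsum_step n (z : vec n) R a b :
  xsum (z + chi a - chi b) R = xsum z R + (a \in R)%:R - (b \in R)%:R.
Proof.
rewrite /xsum; under eq_bigr do rewrite vecE.
by rewrite big_split big_split /= sumrN !sum_chi.
Qed.

Definition vdist n (z x : vec n) : nat := \sum_(t < n) `|(z t - x t)%R|%N.

Lemma dist_step n (z x : vec n) h m :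
  (x h < z h) -> (z m < x m) -> (vdist (z + chi m - chi h)%R x < vdist z x)%N.
Proof.
move=> Hh Hm.
have hm : (h == m) = false by apply/negbTE; apply/eqP => e; subst; lia.
rewrite /vdist (bigD1 h) //= [X in (_ < X)%N](bigD1 h) //=.
rewrite vecE eqxx hm.
rewrite -addSn; apply: leq_add; first lia.
apply: leq_sum => t Hth; rewrite vecE.
case: (eqVneq t m) => [->|tm]; case: (eqVneq t h) => [th|th] //=; try lia.
by rewrite th eqxx in Hth.
Qed.

Lemma exists_gt n (z x : vec n) R :
  xsum x R < xsum z R -> exists2 h, h \in R & x h < z h.
Proof.
move=> Hlt.
have: [exists h in R, x h < z h].
  apply: contraLR Hlt => /existsPn H; rewrite -leNgt; apply: ler_sum => t Ht.
  by have := H t; rewrite Ht /= -leNgt.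
by move=> /exists_inP[h Hh Hz]; exists h.
Qed.

Section E.
Variable K : realType.
Local Open Scope ereal_scope.

Lemma comb (a b : \bar K) (A B C r : K) : A%:E <= a -> B%:E <= b ->
  a + b <= r%:E + C%:E -> (A + B <= r + C)%R.
Proof.
move=> Ha Hb Hab; rewrite -lee_fin EFinD EFinD (le_trans _ Hab) //.
exact: leeD.
Qed.

Lemma fin2 (a b c : \bar K) : a + b <= c -> c < +oo -> a != -oo -> b != -oo ->
  a < +oo /\ b < +oo.
Proof.
by case: a => [a| |]; case: b => [b| |]; case: c => [c| |] => //= *; rewrite !ltey.
Qed.
End E.

Lemma key (K : realType) n (f : vec n -> \bar K) R k x (Fx dr : K) :
  no_minfty f -> Mconvex f ->
  f x = Fx%:E ->
  (forall p, xsum p R = k -> (Fx%:E <= f p)%E) ->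
  (forall h l, h \in R -> l \notin R -> ((dr + Fx)%:E <= f (x + chi h - chi l)%R)%E) ->
  xsum x R = k ->
  forall c N z, (vdist z x < N)%N -> xsum z R = k + c%:R ->
    ((Fx + c%:R * dr)%:E <= f z)%E.
Proof.
move=> Hnm [_ Hex] Hfx H0 H1 Hxk; elim=> [|c IHc].
  by move=> N z _; rewrite addr0 mul0r addr0; exact: H0.
elim=> [|N IHN] z // Hd Hz.
case Efz: (f z) => [r| |]; last first.
- by have := Hnm z; rewrite Efz.
- by rewrite leey.
have zdom : indom f z by rewrite /indom Efz ltey.
have xdom : indom f x by rewrite /indom Hfx ltey.
have [h hR Hh] : exists2 h, h \in R & x h < z h.
  by apply: exists_gt; rewrite Hz Hxk; lia.
have [m Hm Hexm] := Hex z x zdom xdom h Hh.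
have E : z - chi h + chi m = z + chi m - chi h by rewrite addrAC.
rewrite E Efz Hfx in Hexm.
have Hd' : (vdist (z + chi m - chi h)%R x < vdist z x)%N := dist_step Hh Hm.
have Hxz' := xsum_step z R m h; rewrite hR in Hxz'.
have Hxq := xsum_step x R h m; rewrite hR in Hxq.
rewrite lee_fin.
case mR: (m \in R).
- have L1 : ((Fx + c.+1%:R * dr)%:E <= f (z + chi m - chi h)%R)%E.
    apply: IHN; first by apply: leq_trans Hd' _.
    by rewrite Hxz' mR Hz; lia.
  have L2 : (Fx%:E <= f (x + chi h - chi m)%R)%E.
    by apply: H0; rewrite Hxq mR Hxk; lia.
  have := comb L1 L2 Hexm; lra.
- have L1 : ((Fx + c%:R * dr)%:E <= f (z + chi m - chi h)%R)%E.
    apply: (IHc (vdist (z + chi m - chi h) x).+1) => //.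
    by rewrite Hxz' mR Hz; lia.
  have L2 := H1 h m hR (negbT mR).
  have := comb L1 L2 Hexm.
  rewrite -addn1 natrD mulrDl mul1r; lra.
Qed.

Lemma claim1 (K : realType) n (f : vec n -> \bar K) R x :
  no_minfty f -> Mconvex f -> indom f x ->
  forall N z, (vdist z x < N)%N -> indom f z -> xsum x R < xsum z R ->
  exists h, exists2 l, h \in R & l \notin R /\ indom f (x + chi h - chi l).
Proof.
move=> Hnm [_ Hex] xdom; elim=> [|N IHN] z // Hd zdom Hz.
have [h hR Hh] := exists_gt Hz.
have [m Hm Hexm] := Hex z x zdom xdom h Hh.
have E : z - chi h + chi m = z + chi m - chi h by rewrite addrAC.
rewrite E in Hexm.
have [Hz' Hq] : indom f (z + chi m - chi h) /\ indom f (x + chi h - chi m).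
  apply: (fin2 Hexm); [|exact: Hnm|exact: Hnm].
  move: zdom xdom; rewrite /indom.
  by case: (f z) => [a| |]; case: (f x) => [b| |] => //= *; rewrite ltey.
have Hd' : (vdist (z + chi m - chi h)%R x < vdist z x)%N := dist_step Hh Hm.
case mR: (m \in R).
- apply: (IHN (z + chi m - chi h)) => //; first by apply: leq_trans Hd' _.
  by rewrite xsum_step hR mR; lia.
- by exists h, m; rewrite ?mR.
Qed.

Local Open Scope ereal_scope.

Theorem mainTheorem8 (K : realType) (n : nat) (f : vec n -> \bar K) (R : {set 'I_n})
  (kmin kmax k : int) (x : vec n) (i j : 'I_n) :
  no_minfty f -> Mconvex f -> bounded_dom f ->
  R != set0 -> R \proper [set: 'I_n] ->
  is_kmin f R kmin -> is_kmax f R kmax ->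
  (kmin <= k)%R -> (k <= kmax - 2)%R ->
  inM f R k x ->
  i \in R -> j \notin R ->
  (forall h l, h \in R -> l \notin R -> fder f x i j <= fder f x h l) ->
  fder f (x + chi i - chi j)%R i j = fder f x i j ->
  (forall h l, h \in R -> l \notin R ->
     fder f (x + chi i - chi j)%R i j <= fder f (x + chi i - chi j)%R h l) /\
  inM f R (k + 2)%R (x + chi i *+ 2 - chi j *+ 2)%R.
Proof.
move=> Hnm HM _ _ _ _ [[zk zdom zsum] _] _ Hkk [xdom [Hxk xmin]] iR jR Hmin Heq.
case Efx: (f x) => [Fx| |]; last first.
- by have := Hnm x; rewrite Efx.
- by move: xdom; rewrite /indom Efx.
have H0 : forall p, xsum p R = k -> Fx%:E <= f p.
  move=> p Hp; case: (boolP (f p < +oo)) => Hp'.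
    by rewrite -Efx; exact: xmin.
  by rewrite ltey negbK in Hp'; rewrite (eqP Hp') leey.
have Hlt : (xsum x R < xsum zk R)%R by rewrite zsum Hxk; lia.
have [h [l hR [lR qdom]]] := claim1 Hnm HM xdom (ltnSn (vdist zk x)) zdom Hlt.
have Hy : f (x + chi i - chi j)%R < +oo.
  have := Hmin h l hR lR; rewrite /fder Efx.
  move: qdom; rewrite /indom.
  case Eq: (f (x + chi h - chi l)%R) => [r| |] // _; last first.
    by have := Hnm (x + chi h - chi l)%R; rewrite Eq.
  by case: (f (x + chi i - chi j)%R) => //= *; rewrite ltey.
case Efy: (f (x + chi i - chi j)%R) Hy => [Fy| |] // _; last first.
  by have := Hnm (x + chi i - chi j)%R; rewrite Efy.
have H1 : forall h l, h \in R -> l \notin R ->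
    ((Fy - Fx) + Fx)%:E <= f (x + chi h - chi l)%R.
  move=> h' l' hR' lR'; have := Hmin h' l' hR' lR'; rewrite /fder Efy Efx.
  case E: (f (x + chi h' - chi l')%R) => [r| |].
  - by rewrite -!EFinB !lee_fin; lra.
  - by move=> _; exact: leey.
  - by have := Hnm (x + chi h' - chi l')%R; rewrite E.
have K2 : forall z, xsum z R = (k + 2)%R -> (Fx + 2%:R * (Fy - Fx))%:E <= f z.
  move=> z Hz; apply: (key Hnm HM Efx H0 H1 Hxk (ltnSn (vdist z x))).
  by rewrite Hz.
split.
- move=> h' l' hR' lR'; rewrite Heq /fder Efy Efx.
  have := K2 ((x + chi i - chi j) + chi h' - chi l')%R.
  rewrite !xsum_step iR (negbTE jR) hR' (negbTE lR') Hxk.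
  move=> /(_ ltac:(lia)).
  case: (f _) => [r| |] //.
  + by rewrite -!EFinB !lee_fin; lra.
  + by move=> _ /=; exact: leey.
match goal with |- inM _ _ _ ?w =>
  have Hw : w = ((x + chi i - chi j) + chi i - chi j)%R end.
  by apply/ffunP => t; rewrite !ffunE; lia.
rewrite Hw; move: Heq; rewrite /fder Efy Efx.
case Ew: (f _) => [rw| |]; last first.
- by have := Hnm ((x + chi i - chi j) + chi i - chi j)%R; rewrite Ew.
- by [].
rewrite -!EFinB => -[Hrw].
split; first by rewrite /indom Ew ltey.
split; first by rewrite !xsum_step iR (negbTE jR) Hxk; lia.
move=> p _ Hp; rewrite Ew.
apply: le_trans (K2 p Hp); rewrite lee_fin; lra.
Qed.
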